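(* Let $\Pi$ be a $2$-dimensional toral sub-manifold confined to a rational plane, parametrised as $\Pi=\{u\xi+v\eta:(u,v)\in[0,A]\times[0,B]\}$ with $\xi,\eta$ as specified in the context. Then $$\mathcal{G}=\sum_{\substack{\lambda,\lambda'\in\Lambda_m\\ \lambda\neq\lambda'}}\left|\int_0^A\int_0^B e^{2\pi i\langle\lambda-\lambda',u\xi+v\eta\rangle}du\,dv\right|^2\ll_\Pi N\cdot\kappa(\sqrt m).$$
   Context: For a positive integer $m$ let $\Lambda_m=\{\lambda\in\mathbb{Z}^3:\|\lambda\|^2=m\}$ and $N=|\Lambda_m|$; $m$ ranges over integers with $m\not\equiv 0,4,7\pmod 8$ and bounds refer to $m\to\infty$. Let $\vec n=(n_1,n_2,n_3)$ be the unit normal to the plane containing $\Pi\subset\mathbb{R}^3/\mathbb{Z}^3$, with coordinates labelled so that $n_1\ne0$; the plane is rational if $n_2/n_1,n_3/n_1\in\mathbb{Q}$. Here $\xi=\frac{(n_2,-n_1,0)}{\sqrt{n_1^2+n_2^2}}$, $\eta=\frac{(n_1n_3,n_2n_3,-n_1^2-n_2^2)}{\sqrt{n_1^2+n_2^2}}$, and $A=\max\{u:u\xi+v\eta\in\Pi\}$, $B=\max\{v:u\xi+v\eta\in\Pi\}$. For $R>0$, $\kappa(R)$ is the maximal number of points of $\mathbb{Z}^3$ in the intersection of the sphere of radius $R$ centred at the origin with any plane. *)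

(* Defs.v *)
From Stdlib Require Import Reals Lra Lia ZArith QArith List.
From Stdlib Require Import ClassicalEpsilon.
From Coquelicot Require Import Coquelicot.
Import ListNotations.
Open Scope R_scope.

Definition R3 : Type := (R * R * R)%type.
Definition dot (x y : R3) : R :=
  let '(x1, x2, x3) := x in let '(y1, y2, y3) := y in x1 * y1 + x2 * y2 + x3 * y3.
Definition vadd (x y : R3) : R3 :=
  let '(x1, x2, x3) := x in let '(y1, y2, y3) := y in (x1 + y1, x2 + y2, x3 + y3).
Definition vscale (c : R) (x : R3) : R3 :=
  let '(x1, x2, x3) := x in (c * x1, c * x2, c * x3).

Definition Z3 : Type := (Z * Z * Z)%type.
Definition Z3toR3 (p : Z3) : R3 :=
  let '(a, b, c) := p in (IZR a, IZR b, IZR c).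
Definition Z3_eq_dec (p q : Z3) : {p = q} + {p <> q}.
Proof. decide equality; try apply Z.eq_dec; decide equality; apply Z.eq_dec. Defined.

Definition zrange (m : nat) : list Z :=
  map (fun k => (Z.of_nat k - Z.of_nat m)%Z) (seq 0 (2 * m + 1)).

(* Lambda_m = { lambda in Z^3 : |lambda|^2 = m }, as a duplicate-free list
   (every such lambda has all coordinates in [-m, m]). *)
Definition Lam (m : nat) : list Z3 :=
  filter (fun p : Z3 => let '(a, b, c) := p in Z.eqb (a * a + b * b + c * c) (Z.of_nat m))
    (flat_map (fun a => flat_map (fun b => map (fun c => (a, b, c)) (zrange m))
                                (zrange m)) (zrange m)).

Definition Ncard (m : nat) : nat := length (Lam m).

Definition count_plane (m : nat) (a : R3) (c : R) : nat :=
  length (filter (fun p => if Req_EM_T (dot a (Z3toR3 p)) c then true else false) (Lam m)).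

Definition is_plane_normal (a : R3) : Prop := a <> (0, 0, 0).

Fixpoint kappa_aux (m : nat) (n : nat) : nat :=
  match n with
  | O => O
  | S k => if excluded_middle_informative
                (exists (a : R3) (c : R), is_plane_normal a /\ (S k <= count_plane m a c)%nat)
           then S k else kappa_aux m k
  end.

(* kappa(sqrt m): the maximal number of points of Z^3 in the intersection of
   the sphere of radius sqrt m (centred at 0) with any plane.  Every plane
   contains at most N such points, so the maximum is searched in [0, N]. *)
Definition kappa_sqrt (m : nat) : nat := kappa_aux m (Ncard m).

Definition xi_of (n : R3) : R3 :=
  let '(n1, n2, n3) := n in
  vscale (/ sqrt (n1 * n1 + n2 * n2)) (n2, - n1, 0).
Definition eta_of (n : R3) : R3 :=
  let '(n1, n2, n3) := n in
  vscale (/ sqrt (n1 * n1 + n2 * n2)) (n1 * n3, n2 * n3, - (n1 * n1) - n2 * n2).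

(* |int_0^A int_0^B e^{2 pi i <mu, u xi + v eta>} du dv|^2, written as
   (real part)^2 + (imaginary part)^2 of the (iterated Riemann) integral. *)
Definition phase (mu xi eta : R3) (u v : R) : R :=
  2 * PI * dot mu (vadd (vscale u xi) (vscale v eta)).
Definition int_re (mu xi eta : R3) (A B : R) : R :=
  RInt (fun u => RInt (fun v => cos (phase mu xi eta u v)) 0 B) 0 A.
Definition int_im (mu xi eta : R3) (A B : R) : R :=
  RInt (fun u => RInt (fun v => sin (phase mu xi eta u v)) 0 B) 0 A.
Definition int_abs2 (mu xi eta : R3) (A B : R) : R :=
  (int_re mu xi eta A B) ^ 2 + (int_im mu xi eta A B) ^ 2.

Definition vsubZ (p q : Z3) : R3 :=
  let '(a, b, c) := p in let '(a', b', c') := q in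
  (IZR (a - a'), IZR (b - b'), IZR (c - c')).

Definition Gsum (m : nat) (n : R3) (A B : R) : R :=
  fold_right Rplus 0
    (map (fun pq : Z3 * Z3 =>
            if Z3_eq_dec (fst pq) (snd pq) then 0
            else int_abs2 (vsubZ (fst pq) (snd pq)) (xi_of n) (eta_of n) A B)
         (list_prod (Lam m) (Lam m))).

Definition admissible (m : nat) : Prop :=
  (0 < m)%nat /\ (m mod 8 <> 0)%nat /\ (m mod 8 <> 4)%nat /\ (m mod 8 <> 7)%nat.

Definition rational_unit_normal (n : R3) : Prop :=
  let '(n1, n2, n3) := n in
  n1 * n1 + n2 * n2 + n3 * n3 = 1 /\ n1 <> 0 /\
  (exists q2 q3 : Q, n2 / n1 = Q2R q2 /\ n3 / n1 = Q2R q3).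

(* Main.v *)
Require Import Defs.
From Stdlib Require Import Reals Lra Lia ZArith QArith List ClassicalEpsilon.
Import ListNotations.
From Coquelicot Require Import Coquelicot.
Open Scope R_scope.

Ltac req := match goal with |- @eq _ ?x ?y => change (@eq R x y) end.
Definition Pc (X a : R) := RInt (fun u => cos (2*PI*u*a)) 0 X.
Definition Ps (X a : R) := RInt (fun u => sin (2*PI*u*a)) 0 X.

Lemma exc a X : ex_RInt (fun u => cos (2*PI*u*a)) 0 X.
Proof. apply (@ex_RInt_continuous R_CompleteNormedModule); intros z _; apply (@ex_derive_continuous R_AbsRing R_NormedModule); auto_derive; auto. Qed.
Lemma exs a X : ex_RInt (fun u => sin (2*PI*u*a)) 0 X.
Proof. apply (@ex_RInt_continuous R_CompleteNormedModule); intros z _; apply (@ex_derive_continuous R_AbsRing R_NormedModule); auto_derive; auto. Qed.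

Lemma lin2 (f g : R -> R) k1 k2 X : ex_RInt f 0 X -> ex_RInt g 0 X ->
  RInt (fun u => k1 * f u - k2 * g u) 0 X = k1 * RInt f 0 X - k2 * RInt g 0 X.
Proof.
  intros Hf Hg.
  assert (E := RInt_minus (fun u => scal k1 (f u)) (fun u => scal k2 (g u)) 0 X
     (@ex_RInt_scal R_CompleteNormedModule _ _ _ k1 Hf) (@ex_RInt_scal R_CompleteNormedModule _ _ _ k2 Hg)).
  rewrite (@RInt_scal R_CompleteNormedModule _ _ _ _ Hf), (@RInt_scal R_CompleteNormedModule _ _ _ _ Hg) in E.
  exact E.
Qed.
Lemma lin2p (f g : R -> R) k1 k2 X : ex_RInt f 0 X -> ex_RInt g 0 X ->
  RInt (fun u => k1 * f u + k2 * g u) 0 X = k1 * RInt f 0 X + k2 * RInt g 0 X.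
Proof.
  intros Hf Hg.
  assert (E := RInt_plus (fun u => scal k1 (f u)) (fun u => scal k2 (g u)) 0 X
     (@ex_RInt_scal R_CompleteNormedModule _ _ _ k1 Hf) (@ex_RInt_scal R_CompleteNormedModule _ _ _ k2 Hg)).
  rewrite (@RInt_scal R_CompleteNormedModule _ _ _ _ Hf), (@RInt_scal R_CompleteNormedModule _ _ _ _ Hg) in E.
  exact E.
Qed.

Lemma phase_eq mu xi eta u v : phase mu xi eta u v =
  2*PI*u*(dot mu xi) + 2*PI*v*(dot mu eta).
Proof.
  destruct mu as [[m1 m2] m3]; destruct xi as [[x1 x2] x3]; destruct eta as [[e1 e2] e3].
  unfold phase, dot, vadd, vscale; ring.
Qed.

Lemma int_abs2_eq mu xi eta A B : int_abs2 mu xi eta A B =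
  (Pc A (dot mu xi) ^ 2 + Ps A (dot mu xi) ^ 2) * (Pc B (dot mu eta) ^ 2 + Ps B (dot mu eta) ^ 2).
Proof.
  set (a := dot mu xi); set (b := dot mu eta).
  assert (Hre : int_re mu xi eta A B = Pc B b * Pc A a - Ps B b * Ps A a).
  { unfold int_re.
    rewrite (@RInt_ext R_CompleteNormedModule _ (fun u => Pc B b * cos (2*PI*u*a) - Ps B b * sin (2*PI*u*a))).
    - apply lin2; [apply exc | apply exs].
    - intros u _. rewrite (@RInt_ext R_CompleteNormedModule _ (fun v => cos (2*PI*u*a) * cos (2*PI*v*b) - sin (2*PI*u*a) * sin (2*PI*v*b))).
      + rewrite lin2; [fold (Pc B b) (Ps B b); req; ring | apply exc | apply exs].
      + intros v _. rewrite phase_eq. fold a b. apply cos_plus. }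
  assert (Him : int_im mu xi eta A B = Ps B b * Pc A a + Pc B b * Ps A a).
  { unfold int_im.
    rewrite (@RInt_ext R_CompleteNormedModule _ (fun u => Ps B b * cos (2*PI*u*a) + Pc B b * sin (2*PI*u*a))).
    - apply lin2p; [apply exc | apply exs].
    - intros u _. rewrite (@RInt_ext R_CompleteNormedModule _ (fun v => sin (2*PI*u*a) * cos (2*PI*v*b) + cos (2*PI*u*a) * sin (2*PI*v*b))).
      + rewrite lin2p; [fold (Pc B b) (Ps B b); req; ring | apply exc | apply exs].
      + intros v _. rewrite phase_eq. fold a b. apply sin_plus. }
  unfold int_abs2. rewrite Hre, Him. ring.
Qed.

Lemma PcPs_trivial X a : 0 <= X -> Pc X a ^ 2 + Ps X a ^ 2 <= 2 * X ^ 2.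
Proof.
  intros HX.
  assert (H1 : Rabs (Pc X a) <= (X - 0) * 1).
  { apply abs_RInt_le_const; auto. apply exc. intros; apply Rabs_le; apply COS_bound. }
  assert (H2 : Rabs (Ps X a) <= (X - 0) * 1).
  { apply abs_RInt_le_const; auto. apply exs. intros; apply Rabs_le; apply SIN_bound. }
  assert (Pc X a ^ 2 <= X ^ 2). { rewrite <- (pow2_abs (Pc X a)). pose proof (Rabs_pos (Pc X a)). nra. }
  assert (Ps X a ^ 2 <= X ^ 2). { rewrite <- (pow2_abs (Ps X a)). pose proof (Rabs_pos (Ps X a)). nra. }
  lra.
Qed.

Lemma Pc_closed X a : a <> 0 -> Pc X a * (2*PI*a) = sin (2*PI*X*a).
Proof.
  intros Ha. assert (HP : PI > 0) by apply PI_RGT_0.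
  unfold Pc.
  rewrite (@is_RInt_unique R_CompleteNormedModule _ 0 X (minus (sin (2*PI*X*a)/(2*PI*a)) (sin (2*PI*0*a)/(2*PI*a)))).
  - unfold minus, plus, opp; simpl. replace (2*PI*0*a) with 0 by ring. rewrite sin_0. field. lra.
  - apply (@is_RInt_derive R_CompleteNormedModule (fun u => sin (2*PI*u*a)/(2*PI*a))).
    + intros x _. auto_derive; auto. field. lra.
    + intros x _. apply (@ex_derive_continuous R_AbsRing R_NormedModule); auto_derive; auto.
Qed.

Lemma Ps_closed X a : a <> 0 -> Ps X a * (2*PI*a) = 1 - cos (2*PI*X*a).
Proof.
  intros Ha. assert (HP : PI > 0) by apply PI_RGT_0.
  unfold Ps.
  rewrite (@is_RInt_unique R_CompleteNormedModule _ 0 X (minus (- cos (2*PI*X*a)/(2*PI*a)) (- cos (2*PI*0*a)/(2*PI*a)))).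
  - unfold minus, plus, opp; simpl. replace (2*PI*0*a) with 0 by ring. rewrite cos_0. field. lra.
  - apply (@is_RInt_derive R_CompleteNormedModule (fun u => - cos (2*PI*u*a)/(2*PI*a))).
    + intros x _. auto_derive; auto. field. lra.
    + intros x _. apply (@ex_derive_continuous R_AbsRing R_NormedModule); auto_derive; auto.
Qed.

Lemma PcPs_decay X a : (Pc X a ^ 2 + Ps X a ^ 2) * a ^ 2 <= 1.
Proof.
  destruct (Req_dec a 0) as [->|Ha]; [simpl; lra|].
  pose proof (Pc_closed X a Ha) as E1. pose proof (Ps_closed X a Ha) as E2.
  pose proof (SIN_bound (2*PI*X*a)). pose proof (COS_bound (2*PI*X*a)).
  assert (HP : 3 < PI) by (pose proof PI2_3_2; lra).
  set (p := Pc X a) in *; set (q := Ps X a) in *.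
  assert (H1 : (p * (2*PI*a))^2 <= 1) by (rewrite E1; nra).
  assert (H2 : (q * (2*PI*a))^2 <= 4) by (rewrite E2; nra).
  assert (H3 : (p^2 + q^2) * a^2 * (4 * PI^2) <= 5) by nra.
  assert (0 <= (p^2 + q^2) * a^2) by (apply Rmult_le_pos; nra).
  nra.
Qed.

Lemma int_abs2_bound mu xi eta A B : 0 < A -> 0 < B ->
  int_abs2 mu xi eta A B * (1 + (dot mu xi) ^ 2) <= 2 * B ^ 2 * (2 * A ^ 2 + 1).
Proof.
  intros HA HB. rewrite int_abs2_eq.
  set (a := dot mu xi). set (b := dot mu eta).
  pose proof (PcPs_trivial A a (Rlt_le _ _ HA)).
  pose proof (PcPs_trivial B b (Rlt_le _ _ HB)).
  pose proof (PcPs_decay A a).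
  set (X := Pc A a ^ 2 + Ps A a ^ 2) in *. set (Y := Pc B b ^ 2 + Ps B b ^ 2) in *.
  assert (0 <= X) by (unfold X; nra). assert (0 <= Y) by (unfold Y; nra).
  assert (X * (1 + a^2) <= 2*A^2+1) by nra.
  assert (0 <= 1 + a^2) by nra.
  replace (X * Y * (1 + a ^ 2)) with (Y * (X * (1 + a^2))) by ring.
  apply Rle_trans with (Y * (2*A^2+1)). apply Rmult_le_compat_l; auto.
  apply Rmult_le_compat_r; nra.
Qed.
Definition sumR {X : Type} (f : X -> R) (l : list X) : R := fold_right Rplus 0 (map f l).

Lemma sumR_cons {X} (f : X -> R) x l : sumR f (x :: l) = f x + sumR f l.
Proof. reflexivity. Qed.
Lemma sumR_nil {X} (f : X -> R) : sumR f nil = 0.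
Proof. reflexivity. Qed.
Lemma sumR_app {X} (f : X -> R) l1 l2 : sumR f (l1 ++ l2) = sumR f l1 + sumR f l2.
Proof. induction l1; simpl; [unfold sumR; simpl; ring|]. rewrite !sumR_cons, IHl1; ring. Qed.
Lemma sumR_le {X} (f g : X -> R) l : (forall x, In x l -> f x <= g x) -> sumR f l <= sumR g l.
Proof. induction l; intros H; [rewrite !sumR_nil; lra|]. rewrite !sumR_cons.
  apply Rplus_le_compat; [apply H; left; auto | apply IHl; intros; apply H; right; auto]. Qed.
Lemma sumR_nonneg {X} (f : X -> R) l : (forall x, 0 <= f x) -> 0 <= sumR f l.
Proof. intros H; induction l; [rewrite sumR_nil; lra|]. rewrite sumR_cons. specialize (H a); lra. Qed.
Lemma In_le_sumR {X} (f : X -> R) l x : (forall y, 0 <= f y) -> In x l -> f x <= sumR f l.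
Proof. intros H; induction l; intros Hi; [destruct Hi|]. rewrite sumR_cons. destruct Hi as [->|Hi].
  - pose proof (sumR_nonneg f l H); lra.
  - specialize (IHl Hi); specialize (H a); lra. Qed.
Lemma sumR_plus {X} (f g : X -> R) l : sumR (fun x => f x + g x) l = sumR f l + sumR g l.
Proof. induction l; [rewrite !sumR_nil; ring|]. rewrite !sumR_cons, IHl; ring. Qed.
Lemma sumR_scal {X} (f : X -> R) k l : sumR (fun x => k * f x) l = k * sumR f l.
Proof. induction l; [rewrite !sumR_nil; ring|]. rewrite !sumR_cons, IHl; ring. Qed.
Lemma sumR_const {X} (k : R) (l : list X) : sumR (fun _ => k) l = INR (length l) * k.
Proof. induction l; [rewrite !sumR_nil; simpl; ring|]. rewrite !sumR_cons, IHl; simpl length; rewrite S_INR; ring. Qed.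
Lemma sumR_ext {X} (f g : X -> R) l : (forall x, f x = g x) -> sumR f l = sumR g l.
Proof. intros H; induction l; [reflexivity|]. rewrite !sumR_cons, IHl, H; auto. Qed.
Lemma sumR_exch {X Y} (F : X -> Y -> R) l1 l2 :
  sumR (fun x => sumR (F x) l2) l1 = sumR (fun y => sumR (fun x => F x y) l1) l2.
Proof. induction l1.
  - rewrite sumR_nil. symmetry. rewrite (sumR_ext _ (fun _ => 0)); [|intros; apply sumR_nil].
    rewrite sumR_const; ring.
  - rewrite sumR_cons, IHl1. rewrite <- sumR_plus. apply sumR_ext; intros; rewrite sumR_cons; ring. Qed.
Lemma sumR_map {X Y} (f : Y -> R) (h : X -> Y) l : sumR f (map h l) = sumR (fun x => f (h x)) l.
Proof. unfold sumR; rewrite map_map; auto. Qed.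

Lemma fold_prod {X Y} (F : X * Y -> R) l1 l2 :
  fold_right Rplus 0 (map F (list_prod l1 l2)) = sumR (fun x => sumR (fun y => F (x, y)) l2) l1.
Proof. fold (sumR F (list_prod l1 l2)). induction l1; [reflexivity|].
  simpl list_prod. rewrite sumR_app, sumR_cons, IHl1, sumR_map; auto. Qed.

Lemma count_sum m a c K :
  sumR (fun p => if Req_EM_T (dot a (Z3toR3 p)) c then K else 0) (Lam m) = K * INR (count_plane m a c).
Proof. unfold count_plane. induction (Lam m); [rewrite sumR_nil; simpl; ring|].
  rewrite sumR_cons, IHl. simpl filter. destruct Req_EM_T; simpl length; try rewrite S_INR; ring. Qed.

Lemma kappa_ge m k n : (k <= n)%nat ->
  (exists a c, is_plane_normal a /\ (k <= count_plane m a c)%nat) -> (k <= kappa_aux m n)%nat.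
Proof. intros Hk He. induction n; simpl; [lia|].
  destruct excluded_middle_informative as [e|e]; [lia|].
  destruct (Nat.eq_dec k (S n)) as [->|Hne]; [contradiction|]. apply IHn; lia. Qed.

Lemma count_le_kappa m a c : is_plane_normal a -> (count_plane m a c <= kappa_sqrt m)%nat.
Proof. intros Ha. apply kappa_ge; [apply filter_length_le | eauto]. Qed.

Lemma pow2_gt_0 c : c <> 0 -> 0 < c^2.
Proof. intros H; pose proof (Rlt_0_sqr c H); unfold Rsqr in *; simpl; lra. Qed.

Definition Tz (z : Z) : R := if Z.leb z 0 then / (1/2 - IZR z) else 5 - / (IZR z - 1/2).
Definition gz (c : R) (z : Z) : R := / (1 + c^2 * (IZR z)^2).

Lemma Tz_bounds z : 0 < Tz z <= 5.
Proof. unfold Tz. destruct (Z.leb_spec z 0) as [H|H].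
  - apply IZR_le in H. split. apply Rinv_0_lt_compat; lra.
    rewrite <- (Rinv_inv 5). apply Rinv_le_contravar; lra.
  - assert (1 <= IZR z) by (apply IZR_le; lia).
    assert (0 < / (IZR z - 1/2)) by (apply Rinv_0_lt_compat; lra).
    assert (/ (IZR z - 1/2) <= 2) by (rewrite <- (Rinv_inv 2); apply Rinv_le_contravar; lra). lra. Qed.

Lemma key_ineq c t : c <> 0 -> 1 <= t^2 -> / (1 + c^2 * t^2) <= / c^2 * / (t^2 - /4).
Proof. intros Hc Ht. assert (0 < c^2) by (apply pow2_gt_0 ; auto).
  rewrite <- Rinv_mult. apply Rinv_le_contravar. apply Rmult_lt_0_compat; lra. nra. Qed.

Lemma gz_tel c z : c <> 0 -> gz c z <= (1 + / c^2) * (Tz (z + 1) - Tz z).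
Proof. intros Hc. assert (Hc2 : 0 < c^2) by (apply pow2_gt_0 ; auto).
  assert (0 < / c^2) by (apply Rinv_0_lt_compat; auto).
  unfold gz, Tz. rewrite plus_IZR.
  destruct (Z.leb_spec (z+1) 0) as [H1|H1]; destruct (Z.leb_spec z 0) as [H0|H0]; try lia.
  - assert (t : IZR z <= -1) by (apply IZR_le; lia).
    replace (/ (1/2 - (IZR z + 1)) - / (1/2 - IZR z)) with (/ (IZR z ^2 - /4)) by (field; repeat split; nra).
    assert (0 < IZR z ^ 2 - /4) by nra.
    assert (0 < / (IZR z ^2 - /4)) by (apply Rinv_0_lt_compat; auto).
    pose proof (key_ineq c (IZR z) Hc ltac:(nra)). nra.
  - assert (z = 0%Z) by lia. subst. simpl IZR.
    replace (5 - / (0 + 1 - 1/2) - / (1/2 - 0)) with 1 by field.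
    replace (/ (1 + c^2 * 0^2)) with 1 by field. lra.
  - assert (t : 1 <= IZR z) by (apply IZR_le; lia).
    replace (5 - / (IZR z + 1 - 1/2) - (5 - / (IZR z - 1/2))) with (/ (IZR z ^2 - /4)) by (field; repeat split; nra).
    assert (0 < IZR z ^ 2 - /4) by nra.
    assert (0 < / (IZR z ^2 - /4)) by (apply Rinv_0_lt_compat; auto).
    pose proof (key_ineq c (IZR z) Hc ltac:(nra)). nra. Qed.

Lemma tel_sum c b N : c <> 0 ->
  sumR (fun k => gz c (b + Z.of_nat k)) (seq 0 N) <= (1 + / c^2) * (Tz (b + Z.of_nat N) - Tz b).
Proof. intros Hc. induction N.
  - simpl seq; rewrite sumR_nil. replace (b + Z.of_nat 0)%Z with b by lia. lra.
  - rewrite seq_S, sumR_app. change (sumR ?f (?x :: nil)) with (f x + 0). simpl (0 + N)%nat.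
    pose proof (gz_tel c (b + Z.of_nat N) Hc).
    replace (b + Z.of_nat (S N))%Z with (b + Z.of_nat N + 1)%Z by lia. lra. Qed.

Lemma tel_sum5 c b N : c <> 0 ->
  sumR (fun k => gz c (b + Z.of_nat k)) (seq 0 N) <= (1 + / c^2) * 5.
Proof. intros Hc. pose proof (tel_sum c b N Hc). pose proof (Tz_bounds (b + Z.of_nat N)); pose proof (Tz_bounds b).
  assert (0 < / c^2) by (apply Rinv_0_lt_compat, pow2_gt_0; auto). nra. Qed.

Lemma in_zrange (M : nat) z : (- Z.of_nat M <= z <= Z.of_nat M)%Z -> In z (zrange M).
Proof. intros H. unfold zrange. apply in_map_iff. exists (Z.to_nat (z + Z.of_nat M)).
  split; [rewrite Z2Nat.id; lia|]. apply in_seq. lia. Qed.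

Lemma Lam_bound m p : In p (Lam m) ->
  let '(a, b, c) := p in (Z.abs a <= Z.of_nat m /\ Z.abs b <= Z.of_nat m)%Z.
Proof. destruct p as [[a b] c]. unfold Lam. intros H. apply filter_In in H. destruct H as [_ H].
  apply Z.eqb_eq in H. split; nia. Qed.
Definition Jf (P Q : Z) (p : Z3) : Z := let '(a, b, _) := p in (a * P - b * Q)%Z.

Lemma dot_av P Q p : dot (IZR P, - IZR Q, 0) (Z3toR3 p) = IZR (Jf P Q p).
Proof. destruct p as [[a b] c]; simpl. rewrite minus_IZR, !mult_IZR; ring. Qed.

Lemma J_bound P Q m p : (0 < Q)%Z -> In p (Lam m) ->
  (- ((Z.abs P + Q) * Z.of_nat m) <= Jf P Q p <= (Z.abs P + Q) * Z.of_nat m)%Z.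
Proof. intros HQ H. pose proof (Lam_bound m p H). destruct p as [[a b] c]. simpl.
  destruct H0 as [Ha Hb].
  assert (Z.abs a * Z.abs P <= Z.of_nat m * Z.abs P)%Z by (apply Z.mul_le_mono_nonneg_r; lia).
  assert (Z.abs b * Q <= Z.of_nat m * Q)%Z by (apply Z.mul_le_mono_nonneg_r; lia).
  assert (Z.abs (a*P) = Z.abs a * Z.abs P)%Z by apply Z.abs_mul.
  assert (Z.abs (b*Q) = Z.abs b * Q)%Z by (rewrite Z.abs_mul; f_equal; lia).
  nia. Qed.

Theorem lemma4p3 (n : R3) (A B : R) :
  rational_unit_normal n -> 0 < A -> 0 < B ->
  exists (C : R) (M : nat), 0 < C /\
    forall m : nat, (M <= m)%nat -> admissible m ->
      Gsum m n A B <= C * INR (Ncard m) * INR (kappa_sqrt m).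
Proof.
  intros Hn HA HB. destruct n as [[n1 n2] n3].
  destruct Hn as [_ [Hn1 [q2 [q3 [Hq2 _]]]]].
  set (P := Qnum q2). set (Q := Z.pos (Qden q2)).
  assert (HQ : (0 < Q)%Z) by (unfold Q; lia).
  assert (HQR : IZR Q <> 0) by (apply not_0_IZR; lia).
  assert (Hn2 : n2 = n1 * (IZR P * / IZR Q)).
  { unfold Q2R in Hq2. fold P Q in Hq2. rewrite <- Hq2. field. auto. }
  set (s := sqrt (n1 * n1 + n2 * n2)).
  assert (Hs : 0 < s).
  { apply sqrt_lt_R0. pose proof (Rlt_0_sqr n1 Hn1). unfold Rsqr in *. nra. }
  set (c := n1 / (s * IZR Q)).
  assert (Hc : c <> 0).
  { unfold c. unfold Rdiv. apply Rmult_integral_contrapositive; split; auto.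
    apply Rinv_neq_0_compat. apply Rmult_integral_contrapositive; split; lra || auto. }
  assert (Ha : forall l l', dot (vsubZ l l') (xi_of (n1, n2, n3)) = c * IZR (Jf P Q l - Jf P Q l')).
  { intros [[a b] d] [[a' b'] d']. unfold vsubZ, xi_of, vscale, dot, Jf. fold s.
    rewrite Hn2. unfold c. rewrite !minus_IZR, !mult_IZR. field. split; lra || auto. }
  set (E := 2 * B ^ 2 * (2 * A ^ 2 + 1)).
  assert (HE : 0 < E) by (unfold E; nra).
  set (D := 1 + / c ^ 2).
  assert (HD : 0 < D) by (unfold D; pose proof (pow2_gt_0 c Hc); assert (0 < / c^2) by (apply Rinv_0_lt_compat; auto); lra).
  assert (Hg : forall z, 0 < gz c z).
  { intros z. unfold gz. apply Rinv_0_lt_compat. pose proof (pow2_gt_0 c Hc). nra. }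
  assert (Fb : forall l l', (if Z3_eq_dec l l' then 0 else int_abs2 (vsubZ l l') (xi_of (n1, n2, n3)) (eta_of (n1, n2, n3)) A B)
                 <= E * gz c (Jf P Q l' - Jf P Q l)).
  { intros l l'. destruct (Z3_eq_dec l l'). { specialize (Hg (Jf P Q l' - Jf P Q l)%Z). nra. }
    pose proof (int_abs2_bound (vsubZ l l') (xi_of (n1, n2, n3)) (eta_of (n1, n2, n3)) A B HA HB) as Hb.
    rewrite Ha in Hb. fold E in Hb.
    set (X := int_abs2 (vsubZ l l') (xi_of (n1, n2, n3)) (eta_of (n1, n2, n3)) A B) in *.
    assert (Hsq : (c * IZR (Jf P Q l - Jf P Q l')) ^ 2 = c^2 * (IZR (Jf P Q l' - Jf P Q l))^2)
      by (rewrite !minus_IZR; ring).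
    rewrite Hsq in Hb. unfold gz.
    set (w := 1 + c ^ 2 * IZR (Jf P Q l' - Jf P Q l) ^ 2) in *.
    assert (Hw : 0 < w) by (unfold w; pose proof (pow2_gt_0 c Hc); nra).
    replace X with (X * w * / w) by (field; lra).
    apply Rmult_le_compat_r; [left; apply Rinv_0_lt_compat; auto | auto]. }
  exists (E * (D * 5)), 0%nat. split; [nra|].
  intros m _ _.
  set (av := (IZR P, - IZR Q, 0)).
  assert (Hav : is_plane_normal av).
  { unfold is_plane_normal, av. intros H. injection H as H1 H2. apply HQR. lra. }
  set (M := Z.to_nat ((Z.abs P + Q) * Z.of_nat m)).
  assert (HM : Z.of_nat M = ((Z.abs P + Q) * Z.of_nat m)%Z) by (unfold M; rewrite Z2Nat.id; nia).
  set (K := kappa_sqrt m).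
  unfold Gsum. rewrite fold_prod. cbn [fst snd].
  apply Rle_trans with (sumR (fun _ => E * INR K * (D * 5)) (Lam m)).
  2: { rewrite sumR_const. unfold Ncard. right; ring. }
  apply sumR_le; intros l Hl.
  eapply Rle_trans. { apply sumR_le with (g := fun l' => E * gz c (Jf P Q l' - Jf P Q l)). intros; apply Fb. }
  eapply Rle_trans.
  { apply sumR_le with (g := fun l' => sumR (fun z => if Req_EM_T (dot av (Z3toR3 l')) (IZR z) then E * gz c (z - Jf P Q l) else 0) (zrange M)).
    intros l' Hl'.
    assert (HJ : In (Jf P Q l') (zrange M)).
    { apply in_zrange. rewrite HM. pose proof (J_bound P Q m l' HQ Hl'). lia. }
    set (f := fun z => if Req_EM_T (dot av (Z3toR3 l')) (IZR z) then E * gz c (z - Jf P Q l) else 0).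
    replace (E * gz c (Jf P Q l' - Jf P Q l)) with (f (Jf P Q l')).
    - apply In_le_sumR; auto. intros y. unfold f. destruct Req_EM_T; [specialize (Hg (y - Jf P Q l)%Z); nra | lra].
    - unfold f. destruct Req_EM_T as [_|Hne]; auto. exfalso; apply Hne. unfold av. apply dot_av. }
  rewrite sumR_exch.
  eapply Rle_trans.
  { apply sumR_le with (g := fun z => E * gz c (z - Jf P Q l) * INR K). intros z _.
    cbv beta. rewrite count_sum. apply Rmult_le_compat_l. specialize (Hg (z - Jf P Q l)%Z); nra.
    apply le_INR, count_le_kappa; auto. }
  rewrite (sumR_ext _ (fun z => E * INR K * gz c (z - Jf P Q l))) by (intros; ring).
  rewrite sumR_scal. apply Rmult_le_compat_l. { pose proof (pos_INR K); nra. }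
  unfold zrange. rewrite sumR_map.
  rewrite (sumR_ext _ (fun k => gz c ((- Z.of_nat M - Jf P Q l) + Z.of_nat k))) by (intros; f_equal; lia).
  apply tel_sum5; auto.
Qed.
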